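(* For any ideal $\mathcal{I}$ the following are equivalent: (i) $\mathcal{BI}\not\leq_K\mathcal{I}$; (ii) $\mathcal{BI}\not\leq_{KB}\mathcal{I}$; (iii) $\mathcal{BI}\not\sqsubseteq\mathcal{I}$; (iv) for every partition $(X_{(i,j)})_{(i,j)\in\omega^2}$ of $\bigcup\mathcal{I}$ into sets belonging to $\mathcal{I}$ there is $A\notin\mathcal{I}$ such that $A\cap X_{(i,j)}$ is finite for all $(i,j)\in\omega^2$ and $A\cap\bigcup_{j}X_{(i,j)}$ is finite for all but finitely many $i\in\omega$; (v) for every $f:\bigcup\mathcal{I}\to\omega^2$ there is $A\notin\mathcal{I}$ such that $f[A]\in\mathrm{Fin}^2$ and $f|A$ is either constant or finite-to-one.
   Context: An ideal on an infinite countable set $X$ is a family $\mathcal{I}\subseteq\mathcal{P}(X)$ closed under subsets and finite unions, containing all finite subsets, with $X\notin\mathcal{I}$; $\bigcup\mathcal{I}=X$. Partitions may have empty pieces. $\mathrm{Fin}^2$: ideal on $\omega^2$ of all $A$ with only finitely many $n$ such that $\{m:(n,m)\in A\}$ is infinite. $\mathcal{BI}$: ideal on $\omega^3$ of all $A$ for which there is $k$ with $\{(j,l):(i,j,l)\in A\}\in\mathrm{Fin}^2$ for $i<k$ and finite for $i\ge k$. For ideals $\mathcal{I},\mathcal{J}$: $\mathcal{I}\leq_K\mathcal{J}$ if there is a function $f:\bigcup\mathcal{J}\to\bigcup\mathcal{I}$ with $f^{-1}[A]\in\mathcal{J}$ for all $A\in\mathcal{I}$; $\mathcal{I}\leq_{KB}\mathcal{J}$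 if such an $f$ can be chosen finite-to-one; $\mathcal{I}\sqsubseteq\mathcal{J}$ if such an $f$ can be chosen bijective. *)

(* Defs.v *)
From Stdlib Require Import List Arith.
Import ListNotations.

Definition finite_set {X : Type} (A : X -> Prop) : Prop :=
  exists l : list X, forall x, A x -> In x l.

Definition countably_infinite (X : Type) : Prop :=
  exists e : nat -> X, (forall n m, e n = e m -> n = m) /\ (forall x, exists n, e n = x).

(* An ideal on X (with union X: all finite sets, in particular singletons, belong). *)
Definition is_ideal {X : Type} (I : (X -> Prop) -> Prop) : Prop :=
  (forall A B : X -> Prop, I B -> (forall x, A x -> B x) -> I A) /\
  (forall A B : X -> Prop, I A -> I B -> I (fun x => A x \/ B x)) /\
  (forall A : X -> Prop, finite_set A -> I A) /\
  ~ I (fun _ => True).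

Definition Fin2 (A : nat * nat -> Prop) : Prop :=
  finite_set (fun n => ~ finite_set (fun m => A (n, m))).

(* The ideal BI on omega^3 (triples encoded as (i, j, l) = ((i, j), l)). *)
Definition BI (A : nat * nat * nat -> Prop) : Prop :=
  exists k : nat,
    (forall i, i < k -> Fin2 (fun jl => A (i, fst jl, snd jl))) /\
    (forall i, k <= i -> finite_set (fun jl : nat * nat => A (i, fst jl, snd jl))).

Definition katetov_map {X Y : Type} (J : (Y -> Prop) -> Prop) (I : (X -> Prop) -> Prop)
  (f : X -> Y) : Prop :=
  forall A : Y -> Prop, J A -> I (fun x => A (f x)).

Definition finite_to_one {X Y : Type} (f : X -> Y) : Prop :=
  forall y, finite_set (fun x => f x = y).

Definition bijective_map {X Y : Type} (f : X -> Y) : Prop :=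
  (forall x x', f x = f x' -> x = x') /\ (forall y, exists x, f x = y).

Definition K_le {X Y : Type} (J : (Y -> Prop) -> Prop) (I : (X -> Prop) -> Prop) : Prop :=
  exists f : X -> Y, katetov_map J I f.

Definition KB_le {X Y : Type} (J : (Y -> Prop) -> Prop) (I : (X -> Prop) -> Prop) : Prop :=
  exists f : X -> Y, finite_to_one f /\ katetov_map J I f.

Definition sqle {X Y : Type} (J : (Y -> Prop) -> Prop) (I : (X -> Prop) -> Prop) : Prop :=
  exists f : X -> Y, bijective_map f /\ katetov_map J I f.

(* A partition of X indexed by omega^2 (pieces may be empty). *)
Definition is_partition {X Ix : Type} (P : Ix -> X -> Prop) : Prop :=
  (forall x, exists i, P i x) /\ (forall i i' x, P i x -> P i' x -> i = i').

(* Main.v *)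
Require Import Defs.
From Stdlib Require Import List Arith Bool Lia Classical ClassicalEpsilon.
From Stdlib Require Cantor.
Import ListNotations.

Lemma fin_sub {T} (A B : T -> Prop) : finite_set A -> (forall x, B x -> A x) -> finite_set B.
Proof. intros [l Hl] H. exists l. auto. Qed.

Lemma fin_empty {T} (A : T -> Prop) : (forall x, ~ A x) -> finite_set A.
Proof. intros H. exists []. intros x Hx. exfalso; eapply H; eauto. Qed.

Lemma fin_union {T} (A B : T -> Prop) : finite_set A -> finite_set B -> finite_set (fun x => A x \/ B x).
Proof. intros [l1 H1] [l2 H2]. exists (l1 ++ l2). intros x [Hx|Hx]; apply in_or_app; auto. Qed.

Lemma fin_image {T U} (f : T -> U) (A : T -> Prop) : finite_set A -> finite_set (fun y => exists x, A x /\ f x = y).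
Proof. intros [l Hl]. exists (map f l). intros y [x [Hx <-]]. apply in_map. auto. Qed.

Lemma fin_bigunion {T U} (l : list U) (F : U -> T -> Prop) :
  (forall u, In u l -> finite_set (F u)) -> finite_set (fun x => exists u, In u l /\ F u x).
Proof.
  induction l as [|u l IH]; intros H.
  - apply fin_empty. intros x [u [[] _]].
  - destruct (H u (or_introl eq_refl)) as [l1 H1].
    destruct IH as [l2 H2]. { intros v Hv. apply H. right. auto. }
    exists (l1 ++ l2). intros x [v [[<-|Hv] Hx]]; apply in_or_app; [left; auto| right; apply H2; eauto].
Qed.

Lemma fin_preimage_inj {T U} (g : T -> U) (S : U -> Prop) :
  (forall x y, g x = g y -> x = y) -> finite_set S -> finite_set (fun x => S (g x)).
Proof.
  intros Hinj [l Hl].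
  assert (H : exists lx, forall x, In (g x) l -> In x lx).
  { clear Hl. induction l as [|y l [lx Hlx]].
    - exists []. intros x [].
    - destruct (classic (exists x0, g x0 = y)) as [[x0 Hx0]|Hn].
      + exists (x0 :: lx). intros x [Hx|Hx].
        * left. apply Hinj. congruence.
        * right. auto.
      + exists lx. intros x [Hx|Hx]; [exfalso; eauto | auto]. }
  destruct H as [lx Hlx]. exists lx. intros x Hx. auto.
Qed.

Lemma fin_bound (A : nat -> Prop) : finite_set A -> exists k, forall n, A n -> n < k.
Proof.
  intros [l Hl]. exists (S (list_max l)). intros n Hn.
  pose proof (Hl n Hn). assert (n <= list_max l).
  { pose proof (proj1 (list_max_le l (list_max l)) (le_n _)) as HF.
    rewrite Forall_forall in HF. auto. }
  lia.
Qed.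

Fixpoint cnt (d : nat -> bool) (n : nat) : nat :=
  match n with 0 => 0 | S n => cnt d n + (if d n then 1 else 0) end.

Lemma cnt_mono d n m : n <= m -> cnt d n <= cnt d m.
Proof. induction 1; simpl; lia. Qed.

Lemma cnt_strict d n m : n < m -> d n = true -> cnt d n < cnt d m.
Proof.
  intros Hlt Hd. pose proof (cnt_mono d (S n) m Hlt). simpl in H. rewrite Hd in H. lia.
Qed.

Lemma inf_big (d : nat -> bool) : ~ finite_set (fun n => d n = true) -> forall a, exists n, a <= n /\ d n = true.
Proof.
  intros Hinf a. apply NNPP. intros Hn. apply Hinf. exists (seq 0 a). intros x Hx.
  apply in_seq. split; [lia|]. destruct (le_lt_dec a x); [|lia]. exfalso; eauto.
Qed.

Lemma cnt_unbounded d : ~ finite_set (fun n => d n = true) -> forall t, exists M, t < cnt d M.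
Proof.
  intros Hinf t. induction t as [|t [M HM]].
  - destruct (inf_big d Hinf 0) as [n [_ Hn]]. exists (S n). simpl. rewrite Hn. lia.
  - destruct (inf_big d Hinf M) as [n [Hn Hd]]. exists (S n). simpl. rewrite Hd.
    pose proof (cnt_mono d M n Hn). lia.
Qed.

Lemma cnt_fiber_finite d : ~ finite_set (fun n => d n = true) -> forall t, finite_set (fun n => cnt d n = t).
Proof.
  intros Hinf t. destruct (cnt_unbounded d Hinf t) as [M HM]. exists (seq 0 M).
  intros n Hn. apply in_seq. split; [lia|]. destruct (le_lt_dec M n); [|lia].
  pose proof (cnt_mono d M n l). lia.
Qed.

Lemma cnt_hit d : ~ finite_set (fun n => d n = true) -> forall t, exists n, d n = true /\ cnt d n = t.
Proof.
  intros Hinf t. destruct (cnt_unbounded d Hinf t) as [M HM].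
  induction M as [|M IH]; simpl in HM; [lia|].
  destruct (le_lt_dec (cnt d M) t).
  - destruct (d M) eqn:E; [|lia]. exists M. split; auto; lia.
  - auto.
Qed.

Definition dec (P : Prop) : bool := if excluded_middle_informative P then true else false.
Lemma dec_true (P : Prop) : dec P = true <-> P.
Proof. unfold dec. destruct (excluded_middle_informative P); split; intros; congruence || tauto. Qed.

Definition small {X} (h : X -> nat * nat) (A : X -> Prop) : Prop :=
  (forall ij, finite_set (fun x => A x /\ h x = ij)) /\
  finite_set (fun i => ~ finite_set (fun x => A x /\ fst (h x) = i)).

Definition bad {X} (I : (X -> Prop) -> Prop) (h : X -> nat * nat) : Prop :=
  (forall ij, I (fun x => h x = ij)) /\ (forall A, small h A -> I A).

Lemma I_sub {X} (I : (X -> Prop) -> Prop) : is_ideal I -> forall A B, I B -> (forall x, A x -> B x) -> I A.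
Proof. intros [H _]. exact H. Qed.
Lemma I_un {X} (I : (X -> Prop) -> Prop) : is_ideal I -> forall A B, I A -> I B -> I (fun x => A x \/ B x).
Proof. intros [_ [H _]]. exact H. Qed.
Lemma I_fin {X} (I : (X -> Prop) -> Prop) : is_ideal I -> forall A, finite_set A -> I A.
Proof. intros [_ [_ [H _]]]. exact H. Qed.
Lemma I_top {X} (I : (X -> Prop) -> Prop) : is_ideal I -> forall A, I A -> (forall x, A x) -> False.
Proof. intros [H1 [_ [_ H]]] A HA Hall. apply H. eapply H1; eauto. Qed.

Lemma I_list {X U} (I : (X -> Prop) -> Prop) (HI : is_ideal I) (l : list U) (F : U -> X -> Prop) :
  (forall u, In u l -> I (F u)) -> I (fun x => exists u, In u l /\ F u x).
Proof.
  induction l as [|u l IH]; intros H.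
  - apply (I_fin I HI). apply fin_empty. intros x [u [[] _]].
  - apply (I_sub I HI _ _ (I_un I HI _ _ (H u (or_introl eq_refl)) (IH (fun v Hv => H v (or_intror Hv))))).
    intros x [v [[<-|Hv] Hx]]; [left|right]; eauto.
Qed.

Lemma list_choice (P : nat -> nat -> Prop) k :
  (forall i, i < k -> finite_set (P i)) -> exists L, forall i j, i < k -> P i j -> In (i, j) L.
Proof.
  induction k as [|k IH]; intros H.
  - exists []. intros; lia.
  - destruct IH as [L HL]. { intros; apply H; lia. }
    destruct (H k (Nat.lt_succ_diag_r k)) as [lk Hlk].
    exists (map (pair k) lk ++ L). intros i j Hi Hp. apply in_or_app.
    destruct (Nat.eq_dec i k) as [->|Hne].
    + left. apply in_map. auto.
    + right. apply HL; auto; lia.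
Qed.

Lemma bad_kat {X} (I : (X -> Prop) -> Prop) (HI : is_ideal I) (q : X -> nat * nat)
  (g : X -> nat * nat * nat) :
  bad I q -> (forall x y, g x = g y -> x = y) -> (forall x, fst (g x) = q x) -> katetov_map BI I g.
Proof.
  intros [Hpc Hsm] Hinj Hfst B [k [H1 H2]].
  destruct (list_choice (fun i j => ~ finite_set (fun l => B (i, j, l))) k) as [L HL].
  { intros i Hi. apply H1 in Hi. exact Hi. }
  set (U := fun x => exists u, In u L /\ q x = u).
  assert (HU : I U). { apply (I_list I HI). intros u _. apply Hpc. }
  set (A := fun x => B (g x) /\ ~ U x).
  assert (HA : I A).
  { apply Hsm. split.
    - intros [i j].
      destruct (classic (In (i, j) L)) as [Hin|Hnin].
      + apply fin_empty. intros x [[_ HnU] Hq]. apply HnU. exists (i, j). auto.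
      + assert (Hcol : finite_set (fun l => B (i, j, l))).
        { destruct (le_lt_dec k i) as [Hki|Hik].
          - destruct (H2 i Hki) as [lp Hlp]. exists (map snd lp). intros l Hl.
            apply (in_map snd lp (j, l)). apply Hlp. exact Hl.
          - apply NNPP. intros Hn. apply Hnin. apply HL; auto. }
        destruct Hcol as [lc Hlc].
        apply fin_sub with (A := fun x => (fun y => fst y = (i, j) /\ B y) (g x)).
        * apply (fin_preimage_inj g (fun y => fst y = (i, j) /\ B y)); auto. exists (map (fun l => (i, j, l)) lc).
          intros [[i' j'] l] [He Hb]. simpl in He. inversion He; subst.
          apply (in_map (fun l => (i, j, l))). auto.
        * intros x [[Hb _] Hq]. rewrite Hfst. auto.
    - exists (seq 0 k). intros i Hi. apply in_seq. split; [lia|].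
      destruct (le_lt_dec k i) as [Hki|]; [|lia]. exfalso. apply Hi.
      destruct (H2 i Hki) as [lp Hlp].
      apply fin_sub with (A := fun x => (fun y => fst (fst y) = i /\ B y) (g x)).
      + apply (fin_preimage_inj g (fun y => fst (fst y) = i /\ B y)); auto. exists (map (fun jl => (i, fst jl, snd jl)) lp).
        intros [[i' j'] l] [He Hb]. simpl in He. subst.
        apply (in_map (fun jl => (i, fst jl, snd jl)) lp (j', l)). apply Hlp. exact Hb.
      + intros x [[Hb _] Hq]. rewrite Hfst. auto. }
  apply (I_sub I HI _ _ (I_un I HI _ _ HU HA)). intros x Hx.
  destruct (classic (U x)); [left|right]; auto. split; auto.
Qed.

Lemma enum_inv {X} : countably_infinite X ->
  exists (e : X -> nat) (en : nat -> X), (forall n, e (en n) = n) /\ (forall x, en (e x) = x).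
Proof.
  intros [en [Hinj Hsurj]].
  exists (fun x => proj1_sig (constructive_indefinite_description _ (Hsurj x))), en.
  assert (Hx : forall x, en (proj1_sig (constructive_indefinite_description _ (Hsurj x))) = x).
  { intros x. exact (proj2_sig (constructive_indefinite_description _ (Hsurj x))). }
  split; [intros n; apply Hinj; rewrite Hx; auto | auto].
Qed.

Lemma bad_K {X} (I : (X -> Prop) -> Prop) (HX : countably_infinite X) (HI : is_ideal I) h :
  bad I h -> K_le BI I.
Proof.
  intros Hb. destruct (enum_inv HX) as [e [en [He1 He2]]].
  exists (fun x => (h x, e x)). apply bad_kat with (q := h); auto.
  intros x y Hxy. inversion Hxy. rewrite <- (He2 x), <- (He2 y). congruence.
Qed.

Lemma idx_inj {X} (q : X -> nat * nat) (e : X -> nat) (en : nat -> X) :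
  (forall x, en (e x) = x) ->
  forall x y, (q x, cnt (fun i => dec (q (en i) = q x)) (e x)) = (q y, cnt (fun i => dec (q (en i) = q y)) (e y)) -> x = y.
Proof.
  intros He2 x y Hxy. inversion Hxy as [[Hq Hi]]. rewrite Hq in Hi.
  destruct (lt_eq_lt_dec (e x) (e y)) as [[Hlt|Heq]|Hlt].
  + exfalso. pose proof (cnt_strict (fun i => dec (q (en i) = q y)) (e x) (e y) Hlt) as Hs.
    cbv beta in Hs. rewrite He2, Hq in Hs. specialize (Hs (proj2 (dec_true _) eq_refl)). lia.
  + rewrite <- (He2 x), <- (He2 y). congruence.
  + exfalso. pose proof (cnt_strict (fun i => dec (q (en i) = q y)) (e y) (e x) Hlt) as Hs.
    cbv beta in Hs. rewrite He2 in Hs. specialize (Hs (proj2 (dec_true _) eq_refl)). lia.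
Qed.

Lemma bad_sq {X} (I : (X -> Prop) -> Prop) (HX : countably_infinite X) (HI : is_ideal I) q :
  bad I q -> (forall p, ~ finite_set (fun x => q x = p)) -> sqle BI I.
Proof.
  intros Hb Hinf. destruct (enum_inv HX) as [e [en [He1 He2]]].
  exists (fun x => (q x, cnt (fun i => dec (q (en i) = q x)) (e x))). split; [split|].
  - apply idx_inj; auto.
  - intros [p l].
    assert (Hi : ~ finite_set (fun n => dec (q (en n) = p) = true)).
    { intros [ln Hln]. apply (Hinf p). exists (map en ln). intros x Hx.
      rewrite <- (He2 x). apply in_map. apply Hln. apply dec_true. rewrite He2. auto. }
    destruct (cnt_hit _ Hi l) as [n [Hd Hc]]. apply (proj1 (dec_true _)) in Hd.
    exists (en n). rewrite Hd, He1, Hc. auto.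
  - apply bad_kat with (q := q); auto. apply idx_inj; auto.
Qed.

Lemma inf_sup {T} (A B : T -> Prop) : ~ finite_set A -> (forall x, A x -> B x) -> ~ finite_set B.
Proof. intros H Hs Hb. apply H. eapply fin_sub; eauto. Qed.

Lemma of_nat_eq t p : Cantor.of_nat t = p -> t = Cantor.to_nat p.
Proof. intros <-. rewrite Cantor.cancel_to_of. auto. Qed.

Lemma case_alpha {X} (I : (X -> Prop) -> Prop) (HI : is_ideal I) h a0 :
  bad I h -> ~ finite_set (fun b => ~ finite_set (fun x => h x = (a0, b))) ->
  exists q, bad I q /\ (forall p, ~ finite_set (fun x => q x = p)).
Proof.
  intros [Hpc Hsm] Ha.
  set (d := fun b => dec (~ finite_set (fun x => h x = (a0, b)))).
  assert (Hd : ~ finite_set (fun b => d b = true)).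
  { apply (inf_sup _ _ Ha). intros b Hb. apply dec_true. auto. }
  set (Q := fun ab : nat * nat => if Nat.eqb (fst ab) a0 && d (snd ab) then Cantor.of_nat (cnt d (snd ab)) else ab).
  exists (fun x => Q (h x)). split; [split|].
  - intros p. destruct (cnt_fiber_finite d Hd (Cantor.to_nat p)) as [lb Hlb].
    apply (I_sub I HI _ (fun x => exists u, In u (p :: map (pair a0) lb) /\ h x = u)).
    { apply (I_list I HI). intros u _. apply Hpc. }
    intros x Hx. unfold Q in Hx. destruct (h x) as [a b] eqn:E. simpl in Hx.
    destruct (Nat.eqb a a0 && d b) eqn:Eb.
    + apply andb_true_iff in Eb. destruct Eb as [Ea _]. apply Nat.eqb_eq in Ea. subst a.
      exists (a0, b). split; auto. right. apply in_map. apply Hlb. apply of_nat_eq. auto.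
    + exists p. split; [left|]; auto.
  - intros A [HA1 [lq Hlq]]. apply Hsm. split.
    + intros ij. apply fin_sub with (A := fun x => A x /\ Q (h x) = Q ij); auto.
      intros x [Hx Hh]. rewrite Hh. auto.
    + exists (a0 :: lq). intros a Ha'. destruct (Nat.eq_dec a0 a) as [|Hne]; [left; auto|right].
      apply Hlq. apply (inf_sup _ _ Ha'). intros x [Hx Hf]. split; auto.
      unfold Q. destruct (h x) as [a' b] eqn:E. simpl in Hf |- *. subst a'.
      apply Nat.eqb_neq in Hne. rewrite Nat.eqb_sym, Hne. simpl. auto.
  - intros p. destruct (cnt_hit d Hd (Cantor.to_nat p)) as [b [Hdb Hc]].
    pose proof Hdb as Hinf. apply (proj1 (dec_true _)) in Hinf.
    apply (inf_sup _ _ Hinf). intros x Hx. rewrite Hx. unfold Q. simpl.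
    rewrite Nat.eqb_refl, Hdb. simpl. rewrite Hc. apply Cantor.cancel_of_to.
Qed.

Lemma case_beta {X} (I : (X -> Prop) -> Prop) (HI : is_ideal I) h :
  bad I h -> (forall a, finite_set (fun b => ~ finite_set (fun x => h x = (a, b)))) ->
  exists q, bad I q /\ (forall p, ~ finite_set (fun x => q x = p)).
Proof.
  intros [Hpc Hsm] Hb.
  assert (Hrow : forall a, I (fun x => fst (h x) = a)).
  { intros a. destruct (Hb a) as [lb Hlb].
    set (R' := fun x => fst (h x) = a /\ ~ In (snd (h x)) lb).
    assert (HR' : I R').
    { apply Hsm. split.
      - intros [a' b]. destruct (classic (finite_set (fun x => h x = (a', b)))) as [Hf|Hnf].
        + eapply fin_sub; [exact Hf|]. intros x [_ Hx]. auto.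
        + apply fin_empty. intros x [[Hx1 Hx2] Hx]. rewrite Hx in Hx1, Hx2. simpl in *. subst.
          apply Hx2. apply Hlb. auto.
      - exists [a]. intros i Hi. left. apply NNPP. intros Hne. apply Hi. apply fin_empty.
        intros x [[Hx _] Hx']. congruence. }
    apply (I_sub I HI _ _ (I_un I HI _ _ (I_list I HI (map (pair a) lb) (fun u x => h x = u) (fun u _ => Hpc u)) HR')).
    intros x Hx. destruct (classic (In (snd (h x)) lb)) as [Hin|Hnin].
    - left. exists (h x). split; auto. destruct (h x) as [a' b] eqn:E. simpl in *. subst.
      apply in_map. auto.
    - right. split; auto. }
  assert (Hrows : ~ finite_set (fun a => ~ finite_set (fun x => fst (h x) = a))).
  { intros [la Hla].
    set (R'' := fun x => ~ In (fst (h x)) la).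
    assert (HR'' : I R'').
    { apply Hsm. split.
      - intros [a b]. destruct (classic (In a la)) as [Hin|Hnin].
        + apply fin_empty. intros x [Hx Hh]. unfold R'' in Hx. rewrite Hh in Hx. simpl in Hx. auto.
        + apply NNPP. intros Hn. apply Hnin. apply Hla. apply (inf_sup _ _ Hn).
          intros x [_ Hh]. rewrite Hh. auto.
      - apply fin_empty. intros a Ha. destruct (classic (In a la)) as [Hin|Hnin].
        + apply Ha. apply fin_empty. intros x [Hx Hh]. unfold R'' in Hx. rewrite Hh in Hx. simpl in Hx. auto.
        + apply Hnin. apply Hla. apply (inf_sup _ _ Ha). intros x [_ Hh]. auto. }
    apply (I_top I HI _ (I_un I HI _ _ (I_list I HI la (fun a x => fst (h x) = a) (fun a _ => Hrow a)) HR'')).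
    intros x. destruct (classic (In (fst (h x)) la)); [left; eauto|right; auto]. }
  set (d := fun a => dec (~ finite_set (fun x => fst (h x) = a))).
  assert (Hd : ~ finite_set (fun a => d a = true)).
  { apply (inf_sup _ _ Hrows). intros a Ha. apply dec_true. auto. }
  set (Q := fun ab : nat * nat => Cantor.of_nat (cnt d (fst ab))).
  exists (fun x => Q (h x)). split; [split|].
  - intros p. destruct (cnt_fiber_finite d Hd (Cantor.to_nat p)) as [la Hla].
    apply (I_sub I HI _ _ (I_list I HI la (fun a x => fst (h x) = a) (fun a _ => Hrow a))).
    intros x Hx. exists (fst (h x)). split; auto. apply Hla. apply of_nat_eq. exact Hx.
  - intros A [HA1 _]. apply Hsm. split.
    + intros [a b]. apply fin_sub with (A := fun x => A x /\ Q (h x) = Cantor.of_nat (cnt d a)); auto.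
      intros x [Hx Hh]. rewrite Hh. auto.
    + apply fin_empty. intros a Ha. apply Ha.
      apply fin_sub with (A := fun x => A x /\ Q (h x) = Cantor.of_nat (cnt d a)); auto.
      intros x [Hx Hh]. split; auto. unfold Q. rewrite Hh. auto.
  - intros p. destruct (cnt_hit d Hd (Cantor.to_nat p)) as [a [Hda Hc]].
    pose proof Hda as Hinf. apply (proj1 (dec_true _)) in Hinf.
    apply (inf_sup _ _ Hinf). intros x Hx. unfold Q. rewrite Hx, Hc. apply Cantor.cancel_of_to.
Qed.

Lemma bad_sq' {X} (I : (X -> Prop) -> Prop) (HX : countably_infinite X) (HI : is_ideal I) h :
  bad I h -> sqle BI I.
Proof.
  intros Hb.
  destruct (classic (exists a0, ~ finite_set (fun b => ~ finite_set (fun x => h x = (a0, b))))) as [[a0 Ha]|Hn].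
  - destruct (case_alpha I HI h a0 Hb Ha) as [q [Hq Hinf]]. eapply bad_sq; eauto.
  - destruct (case_beta I HI h Hb) as [q [Hq Hinf]].
    + intros a. apply NNPP. intros Hf. apply Hn. eauto.
    + eapply bad_sq; eauto.
Qed.

Lemma kat_bad {X} (I : (X -> Prop) -> Prop) (HI : is_ideal I) (f : X -> nat * nat * nat) :
  katetov_map BI I f -> bad I (fun x => fst (f x)).
Proof.
  intros Hk. split.
  - intros [i j]. apply (Hk (fun y => fst y = (i, j))). exists (S i). split.
    + intros i' Hi'. exists [j]. intros n Hn. simpl in Hn.
      destruct (Nat.eq_dec n j) as [->|Hne]; [left; auto|].
      exfalso. apply Hn. apply fin_empty. intros m Hm. inversion Hm. auto.
    + intros i' Hi'. apply fin_empty. intros [n m] Hm. simpl in Hm. inversion Hm. lia.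
  - intros A [Hp [lr Hlr]].
    set (B := fun y => exists x, A x /\ f x = y).
    assert (HB : BI B).
    { destruct (fin_bound _ (ex_intro _ lr Hlr)) as [k Hk'].
      exists k. split.
      - intros i Hi. apply fin_empty. intros j Hj. apply Hj. simpl.
        apply fin_sub with (A := fun l => exists x, (fun x => A x /\ fst (f x) = (i, j)) x /\ (fun x => snd (f x)) x = l).
        + apply fin_image. apply Hp.
        + intros l [x [Hx Hfx]]. exists x. rewrite Hfx. simpl. auto.
      - intros i Hi.
        assert (Hf : finite_set (fun x => A x /\ fst (fst (f x)) = i)).
        { apply NNPP. intros Hn. specialize (Hk' i (Hn)). lia. }
        apply fin_sub with (A := fun jl => exists x, (fun x => A x /\ fst (fst (f x)) = i) x /\ (fun x => (snd (fst (f x)), snd (f x))) x = jl).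
        + apply fin_image. auto.
        + intros [j l] [x [Hx Hfx]]. exists x. rewrite Hfx. simpl. auto. }
    apply (I_sub I HI _ _ (Hk B HB)). intros x Hx. exists x. auto.
Qed.

Definition C4 {X} (I : (X -> Prop) -> Prop) : Prop :=
    forall P : nat * nat -> X -> Prop,
      is_partition P -> (forall ij, I (P ij)) ->
      exists A : X -> Prop, ~ I A /\
        (forall ij, finite_set (fun x => A x /\ P ij x)) /\
        finite_set (fun i => ~ finite_set (fun x => A x /\ exists j, P (i, j) x)).

Definition C5 {X} (I : (X -> Prop) -> Prop) : Prop :=
    forall f : X -> nat * nat,
      exists A : X -> Prop, ~ I A /\
        Fin2 (fun y => exists x, A x /\ f x = y) /\
        ((forall x x', A x -> A x' -> f x = f x') \/
         (forall y, finite_set (fun x => A x /\ f x = y))).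

Lemma notc4_bad {X} (I : (X -> Prop) -> Prop) h : bad I h -> ~ C4 I.
Proof.
  intros [Hpc Hsm] H4.
  destruct (H4 (fun ij x => h x = ij)) as [A [HA [Hp Hr]]].
  - split; [intros x; eauto | intros i i' x -> ->; auto].
  - auto.
  - apply HA. apply Hsm. split; auto.
    eapply fin_sub; [exact Hr|]. intros i Hi. apply (inf_sup _ _ Hi).
    intros x [Hx Hf]. split; auto. exists (snd (h x)). rewrite <- Hf. destruct (h x); auto.
Qed.

Lemma bad_of_notc4 {X} (I : (X -> Prop) -> Prop) (HI : is_ideal I) : ~ C4 I -> exists h, bad I h.
Proof.
  intros Hn. apply NNPP. intros Hnb. apply Hn. intros P Hpart Hpc. apply NNPP. intros Hno.
  apply Hnb.
  exists (fun x => proj1_sig (constructive_indefinite_description _ (proj1 Hpart x))).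
  set (h := fun x => proj1_sig (constructive_indefinite_description _ (proj1 Hpart x))).
  assert (Hh : forall x, P (h x) x).
  { intros x. exact (proj2_sig (constructive_indefinite_description _ (proj1 Hpart x))). }
  assert (Hh2 : forall ij x, P ij x -> h x = ij).
  { intros ij x Hx. apply (proj2 Hpart _ _ x); auto. }
  split.
  - intros ij. apply (I_sub I HI _ _ (Hpc ij)). intros x <-. auto.
  - intros A [Hp Hr]. apply NNPP. intros HA. apply Hno. exists A. split; [auto|split].
    + intros ij. eapply fin_sub; [exact (Hp ij)|]. intros x [Hx HP]. split; auto.
    + eapply fin_sub; [exact Hr|]. intros i Hi. apply (inf_sup _ _ Hi).
      intros x [Hx [j HP]]. split; auto. rewrite (Hh2 _ _ HP). auto.
Qed.

Lemma notc5_bad {X} (I : (X -> Prop) -> Prop) (HI : is_ideal I) h : bad I h -> ~ C5 I.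
Proof.
  intros [Hpc Hsm] H5. destruct (H5 h) as [A [HA [[lr Hlr] [Hc|Hf]]]].
  - destruct (classic (exists x0, A x0)) as [[x0 Hx0]|Hne].
    + apply HA. apply (I_sub I HI _ _ (Hpc (h x0))). intros x Hx. apply Hc; auto.
    + apply HA. apply (I_fin I HI). apply fin_empty. intros x Hx. eauto.
  - apply HA. apply Hsm. split; auto. exists lr. intros i Hi. apply Hlr. intros [lm Hlm].
    apply Hi. apply fin_sub with (A := fun x => exists m, In m lm /\ (fun m x => A x /\ h x = (i, m)) m x).
    + apply fin_bigunion. intros m _. apply Hf.
    + intros x [Hx Hr]. exists (snd (h x)). split.
      * apply Hlm. exists x. split; auto. rewrite <- Hr. destruct (h x); auto.
      * split; auto. rewrite <- Hr. destruct (h x); auto.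
Qed.

Lemma c4_c5 {X} (I : (X -> Prop) -> Prop) : C4 I -> C5 I.
Proof.
  intros H4 f. destruct (classic (exists y, ~ I (fun x => f x = y))) as [[y Hy]|Hn].
  - exists (fun x => f x = y). split; auto. split.
    + apply fin_empty. intros n Hn. apply Hn. exists [snd y]. intros m [x [Hx Hfx]].
      left. rewrite Hx in Hfx. subst y. auto.
      rewrite Hfx. auto.
    + left. intros x x' -> ->. auto.
  - destruct (H4 (fun ij x => f x = ij)) as [A [HA [Hp [lr Hr]]]].
    + split; [intros x; eauto | intros i i' x -> ->; auto].
    + intros ij. apply NNPP. intros Hij. apply Hn. eauto.
    + exists A. split; auto. split; [|right; auto].
      exists lr. intros n Hnf. apply Hr. intros Hfin. apply Hnf.
      apply fin_sub with (A := fun m => exists x, (fun x => A x /\ exists j, f x = (n, j)) x /\ (fun x => snd (f x)) x = m).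
      * apply fin_image. auto.
      * intros m [x [Hx Hfx]]. exists x. rewrite Hfx. simpl. split; [split|]; eauto.
Qed.

Lemma K_sq {X} (I : (X -> Prop) -> Prop) (HX : countably_infinite X) (HI : is_ideal I) :
  K_le BI I -> sqle BI I.
Proof. intros [f Hf]. apply (bad_sq' I HX HI _ (kat_bad I HI f Hf)). Qed.

Lemma sq_KB {X} (I : (X -> Prop) -> Prop) : sqle BI I -> KB_le BI I.
Proof.
  intros [f [[Hinj _] Hk]]. exists f. split; auto. intros y.
  destruct (classic (exists x0, f x0 = y)) as [[x0 Hx0]|Hn].
  - exists [x0]. intros x Hx. left. apply Hinj. congruence.
  - apply fin_empty. intros x Hx. eauto.
Qed.

Lemma KB_K {X} (I : (X -> Prop) -> Prop) : KB_le BI I -> K_le BI I.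
Proof. intros [f [_ Hf]]. exists f. auto. Qed.

Theorem proposition4p4 (X : Type) (I : (X -> Prop) -> Prop)
  (HX : countably_infinite X) (HI : is_ideal I) :
  let c1 := ~ K_le BI I in
  let c2 := ~ KB_le BI I in
  let c3 := ~ sqle BI I in
  let c4 :=
    forall P : nat * nat -> X -> Prop,
      is_partition P -> (forall ij, I (P ij)) ->
      exists A : X -> Prop, ~ I A /\
        (forall ij, finite_set (fun x => A x /\ P ij x)) /\
        finite_set (fun i => ~ finite_set (fun x => A x /\ exists j, P (i, j) x)) in
  let c5 :=
    forall f : X -> nat * nat,
      exists A : X -> Prop, ~ I A /\
        Fin2 (fun y => exists x, A x /\ f x = y) /\
        ((forall x x', A x -> A x' -> f x = f x') \/
         (forall y, finite_set (fun x => A x /\ f x = y))) in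
  (c1 <-> c2) /\ (c1 <-> c3) /\ (c1 <-> c4) /\ (c1 <-> c5).
Proof.
  intros c1 c2 c3 c4 c5.
  change c4 with (C4 I). change c5 with (C5 I). unfold c1, c2, c3.
  assert (H14 : ~ K_le BI I <-> C4 I).
  { split.
    - intros H1. apply NNPP. intros Hn. destruct (bad_of_notc4 I HI Hn) as [h Hh].
      apply H1. eapply bad_K; eauto.
    - intros H4 [f Hf]. apply (notc4_bad I _ (kat_bad I HI f Hf)). auto. }
  split; [|split; [|split]].
  - split.
    + intros H1 H2. apply H1. apply KB_K. auto.
    + intros H2 H1. apply H2. apply sq_KB. apply K_sq; auto.
  - split.
    + intros H1 H3. apply H1. apply KB_K. apply sq_KB. auto.
    + intros H3 H1. apply H3. apply K_sq; auto.
  - exact H14.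
  - split.
    + intros H1. apply c4_c5. apply H14. auto.
    + intros H5 [f Hf]. apply (notc5_bad I HI _ (kat_bad I HI f Hf)). auto.
Qed.
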